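(* Let $\Delta \geq 3$ and let $\Pi^{\Delta}$ be the node-edge-checkable problem defined in the context. Then there exists a node-edge-checkable problem $\mathcal{G}$ such that $\Pi^{\Delta} \xrightarrow{0} \mathcal{G}$, $\mathcal{Q}(\mathcal{G}) \xrightarrow{0} \mathcal{G}$, and $\mathcal{G}$ is not $0$-round solvable. That is, $\Pi^{\Delta}$ has a nontrivial fixed point relaxation.
   Context: Fix an integer $\Delta$. A node-edge-checkable problem $\Pi=(\Sigma_\Pi,\mathcal{N}_\Pi,\mathcal{E}_\Pi)$ consists of: - a finite label set $\Sigma_\Pi$; - a set $\mathcal{N}_\Pi$ of cardinality-$\Delta$ multisets over $\Sigma_\Pi$, the node constraint; - a set $\mathcal{E}_\Pi$ of cardinality-$2$ multisets over $\Sigma_\Pi$, the edge constraint. Multisets are called configurations. A solution on a $\Delta$-regular graph assigns a label to each half-edge $(v,e)$ such that the multiset of labels around every node lies in $\mathcal{N}_\Pi$ and the two labels on every edge form a configuration in $\mathcal{E}_\Pi$. $\Pi'$ is a relaxation of $\Pi$, written $\Pi \xrightarrow{0} \Pi'$, if there is a map $f$ with the following properties. For every configuration $C=L_1\dots L_\Delta\in\mathcal{N}_\Pi$ (with a fixed listing) and every $1\le j\le\Delta$, $f$ assigns a label $f(C,j)\in\Sigma_{\Pi'}$. The map must satisfy: - (i) $f(C,1)\dots f(C,\Delta)\in\mathcal{N}_{\Pi'}$ for every $C\in\mathcal{N}_\Pi$; - (ii) whenever $C,C'\in\mathcal{N}_\Pi$ and the $j$-th entry of $C$ together with the $j'$-th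 entry of $C'$ form a configuration in $\mathcal{E}_\Pi$, we have $f(C,j)\,f(C',j')\in\mathcal{E}_{\Pi'}$. Problems differing only by a renaming of labels are identified. Let $\mathcal{T}$ be the trivial problem with $\Sigma=\{x\}$, $\mathcal{N}=\{x\cdots x\}$ and $\mathcal{E}=\{x\,x\}$. A problem $\Pi$ is $0$-round solvable if $\mathcal{T}\xrightarrow{0}\Pi$. Round elimination. Given $\Pi$, the problem $\mathrm{R}(\Pi)$ is defined as follows. - $\mathcal{E}_{\mathrm{R}(\Pi)}$ is the set of configurations $S_1S_2$ of nonempty subsets of $\Sigma_\Pi$ that (a) satisfy $L_1L_2\in\mathcal{E}_\Pi$ for all $L_1\in S_1,L_2\in S_2$, and (b) are maximal among such configurations. Maximal means there is no other such configuration $S_1'S_2'$ and permutation $\rho$ with $S_i\subseteq S'_{\rho(i)}$ for all $i$ and strict inclusion for some $i$. - $\Sigma_{\mathrm{R}(\Pi)}$ is the set of sets occurring in $\mathcal{E}_{\mathrm{R}(\Pi)}$. - $\mathcal{N}_{\mathrm{R}(\Pi)}$ is the set of configurations $S_1\dots S_\Delta$ over $\Sigma_{\mathrm{R}(\Pi)}$ for which some choice $L_i\in S_i$ gives $L_1\dots L_\Delta\in\mathcal{N}_\Pi$. The problem $\bar{\mathrm{R}}(\Pi)$ is defined dually, with the roles of node and edge constraints swapped. - $\mathcal{N}_{\bar{\mathrm{R}}(\Pi)}$ consists of the maximal configurations $S_1\dots S_\Delta$ of nonempty subsets such that every choice $L_i\in S_i$ lies in $\mathcal{N}_\Pi$.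 - $\Sigma_{\bar{\mathrm{R}}(\Pi)}$ is the set of sets occurring in $\mathcal{N}_{\bar{\mathrm{R}}(\Pi)}$. - $\mathcal{E}_{\bar{\mathrm{R}}(\Pi)}$ consists of the configurations $S_1S_2$ over $\Sigma_{\bar{\mathrm{R}}(\Pi)}$ for which some $L_1\in S_1,L_2\in S_2$ satisfy $L_1L_2\in\mathcal{E}_\Pi$. Set $\mathcal{Q}(\Pi)=\bar{\mathrm{R}}(\mathrm{R}(\Pi))$. The problem $\Pi^{\Delta}$ (a homomorphism problem to a fixed graph $H_\Delta$) is defined as follows. Its label set is $\Sigma=\{1,\dots,\Delta\}\times\{1,\dots,\Delta\}$. Its node constraint consists of the configurations $c\,c\cdots c$ for every $c\in\Sigma$. Its edge constraint consists of all configurations $(y,z)\,(y',z')$ satisfying at least one of the following: - (1) $y\ne1\ne z$, $y\ne y'$ and $z\ne z'$ (or symmetrically $y'\ne1\ne z'$, $y\ne y'$ and $z\ne z'$); - (2) $y=y'=1$, $z\ne1\ne z'$ and $z\ne z'$; - (3) $z=z'=1$, $y\ne1\ne y'$ and $y\ne y'$. *)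

(* Defs.v *)
From mathcomp Require Import all_boot all_fingroup.
Set Implicit Arguments. Unset Strict Implicit. Unset Printing Implicit Defensive.

Definition mset (T : finType) := {ffun T -> nat}.
Definition msize (T : finType) (m : mset T) : nat := \sum_(x : T) m x.
Definition mset_of (T : finType) (s : seq T) : mset T := [ffun x => count_mem x s].
Definition mlist (T : finType) (m : mset T) : seq T :=
  flatten [seq nseq (m x) x | x <- enum T].

Record problem := Problem {
  lab : finType;
  nodeC : pred (mset lab);
  edgeC : pred (mset lab) }.
Arguments nodeC : clear implicits.
Arguments edgeC : clear implicits.
Arguments lab : clear implicits.

Definition wf_problem (D : nat) (P : problem) : Prop :=
  (forall m, nodeC P m -> msize m = D) /\ (forall m, edgeC P m -> msize m = 2).

Definition relax (D : nat) (P P' : problem) : Prop :=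
  exists f : mset (lab P) -> 'I_D -> lab P',
    (forall C, nodeC P C -> nodeC P' (mset_of [seq f C j | j <- enum 'I_D])) /\
    (forall C C' (j j' : 'I_D) (L1 L2 : lab P),
        nodeC P C -> nodeC P C' ->
        onth (mlist C) j = Some L1 -> onth (mlist C') j' = Some L2 ->
        edgeC P (mset_of [:: L1; L2]) ->
        edgeC P' (mset_of [:: f C j; f C' j'])).

Definition trivial_problem (D : nat) : problem :=
  @Problem unit (fun m => m == mset_of (nseq D tt))
                        (fun m => m == mset_of [:: tt; tt]).

Definition zero_round_solvable (D : nat) (P : problem) : Prop :=
  relax D (trivial_problem D) P.

Section RE.
Variable P : problem.
Local Notation T := (lab P).

Definition goodE (S1 S2 : {set T}) : bool :=
  [&& S1 != set0, S2 != set0 &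
      [forall L1 in S1, forall L2 in S2, edgeC P (mset_of [:: L1; L2])]].

Definition maximalE (S1 S2 : {set T}) : bool :=
  goodE S1 S2 &&
  ~~ [exists S1' : {set T}, exists S2' : {set T},
        goodE S1' S2' &&
        (((S1 \subset S1') && (S2 \subset S2') &&
            ((S1 \proper S1') || (S2 \proper S2'))) ||
         ((S1 \subset S2') && (S2 \subset S1') &&
            ((S1 \proper S2') || (S2 \proper S1'))))].

Definition labR_pred (S : {set T}) : bool :=
  [exists S' : {set T}, maximalE S S' || maximalE S' S].

Definition labR : finType := {S : {set T} | labR_pred S}.

Definition R_problem (D : nat) : problem :=
  @Problem labR
    (fun m => [exists t : {ffun 'I_D -> labR},
                (m == mset_of (codom t)) &&
                [exists c : {ffun 'I_D -> T},
                   [forall i, c i \in val (t i)] && nodeC P (mset_of (codom c))]])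
    (fun m => [exists S1 : labR, exists S2 : labR,
                (m == mset_of [:: S1; S2]) && maximalE (val S1) (val S2)]).
End RE.

Section REbar.
Variable D : nat.
Variable P : problem.
Local Notation T := (lab P).

Definition goodN (t : {ffun 'I_D -> {set T}}) : bool :=
  [forall i, t i != set0] &&
  [forall c : {ffun 'I_D -> T},
     [forall i, c i \in t i] ==> nodeC P (mset_of (codom c))].

Definition maximalN (t : {ffun 'I_D -> {set T}}) : bool :=
  goodN t &&
  ~~ [exists t' : {ffun 'I_D -> {set T}}, exists rho : 'S_D,
        [&& goodN t', [forall i, t i \subset t' (rho i)] &
            [exists i, t i \proper t' (rho i)]]].

Definition labRbar_pred (S : {set T}) : bool :=
  [exists t : {ffun 'I_D -> {set T}}, maximalN t && [exists i, t i == S]].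

Definition labRbar : finType := {S : {set T} | labRbar_pred S}.

Definition Rbar_problem : problem :=
  @Problem labRbar
    (fun m => [exists t : {ffun 'I_D -> labRbar},
                (m == mset_of (codom t)) && maximalN [ffun i => val (t i)]])
    (fun m => [exists S1 : labRbar, exists S2 : labRbar,
                (m == mset_of [:: S1; S2]) &&
                [exists L1 in val S1, exists L2 in val S2,
                   edgeC P (mset_of [:: L1; L2])]]).
End REbar.

Definition Q_problem (D : nat) (P : problem) : problem :=
  Rbar_problem D (R_problem P D).

(** Labels (y,z) in {1..D}x{1..D} are encoded by 'I_D x 'I_D, value k <-> k+1;
    so "y = 1" is "val y == 0". *)
Definition isone (D : nat) (y : 'I_D) : bool := val y == 0.

Definition PiE (D : nat) (a b : 'I_D * 'I_D) : bool :=
  let: (y, z) := a in let: (y', z') := b in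
  [|| [&& ~~ isone y, ~~ isone z, y != y' & z != z'],
      [&& ~~ isone y', ~~ isone z', y != y' & z != z'],
      [&& isone y, isone y', ~~ isone z, ~~ isone z' & z != z'] |
      [&& isone z, isone z', ~~ isone y, ~~ isone y' & y != y']].

Definition PiDelta (D : nat) : problem :=
  @Problem (('I_D * 'I_D)%type : finType)
    (fun m => [exists c : 'I_D * 'I_D, m == mset_of (nseq D c)])
    (fun m => [exists a : 'I_D * 'I_D, exists b : 'I_D * 'I_D,
                (m == mset_of [:: a; b]) && PiE a b]).

(* Main.v *)
Require Import Defs.
From mathcomp Require Import all_boot all_fingroup.
Set Implicit Arguments. Unset Strict Implicit. Unset Printing Implicit Defensive.

Lemma count_mlist (T : finType) (m : mset T) (x : T) : count_mem x (mlist m) = m x.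
Proof.
rewrite /mlist count_flatten -map_comp sumnE big_map.
rewrite (eq_bigr (fun y => (y == x) * m y)); last first.
  by move=> y _ /=; rewrite count_nseq /= eq_sym.
rewrite big_enum /= (bigD1 x) //= eqxx mul1n big1 ?addn0 //.
by move=> y /negbTE ->.
Qed.

Lemma perm_mlist (T : finType) (s : seq T) : perm_eq (mlist (mset_of s)) s.
Proof. apply/allP => x _ /=. rewrite count_mlist ffunE. by []. Qed.

Lemma mset_perm (T : finType) (s1 s2 : seq T) : mset_of s1 = mset_of s2 -> perm_eq s1 s2.
Proof.
move=> h; apply/allP => x _ /=; have := congr1 (fun m : mset T => m x) h.
by rewrite !ffunE => ->.
Qed.

Lemma msize_mset (T : finType) (s : seq T) : msize (mset_of s) = size s.
Proof.
rewrite /msize -(perm_size (perm_mlist s)) /mlist size_flatten /shape -map_comp sumnE big_map.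
by rewrite big_enum /=; apply: eq_bigr => x _; rewrite /= size_nseq.
Qed.

Lemma mem_mlist (T : finType) (m : mset T) x : (x \in mlist m) = (0 < m x).
Proof. by rewrite -count_mlist -has_pred1 has_count. Qed.

Lemma pair_mset_eq (T : finType) (x1 x2 y1 y2 : T) :
  mset_of [:: x1; x2] = mset_of [:: y1; y2] ->
  (x1 = y1 /\ x2 = y2) \/ (x1 = y2 /\ x2 = y1).
Proof.
move/mset_perm => h.
have : x1 \in [:: y1; y2] by rewrite -(perm_mem h) mem_head.
rewrite !inE => /orP [/eqP e|/eqP e]; subst.
  left; split => //; move: h; rewrite perm_cons => /perm_mem h1.
  by have := h1 x2; rewrite !inE eqxx => /esym/eqP.
right; split => //.
have h2 : perm_eq [:: y2; x2] [:: y2; y1].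
  by apply: (perm_trans h); rewrite (perm_catC [:: y1] [:: y2]).
move: h2; rewrite perm_cons => /perm_mem h1.
by have := h1 x2; rewrite !inE eqxx => /esym/eqP.
Qed.

Section G.
Variable D : nat.
Definition V := (bool * 'I_D)%type.
Definition Kedge (u v : V) : bool :=
  ~~ [&& u.1 != v.1, val u.2 == 0 & val v.2 == 0] && ((u == v) ==> (val u.2 == 0)).
Definition compat (X Y : {set V}) : bool := [forall u in X, forall v in Y, Kedge u v].
Definition bad (l : seq {set V}) : bool :=
  [exists b : bool, exists p : 'S_D, [forall i : 'I_D, (b, i) \notin nth set0 l (p i)]].
Definition Gprob : problem :=
  @Problem {set V}
    (fun m => [exists s : D.-tuple {set V}, (m == mset_of s) && ~~ bad s])
    (fun m => [exists X : {set V}, exists Y : {set V}, (m == mset_of [:: X; Y]) && compat X Y]).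

Lemma Kedge_sym u v : Kedge u v = Kedge v u.
Proof.
rewrite /Kedge; case: (eqVneq u v) => [->//|ne].
rewrite [v.1 == u.1]eq_sym.
by case: (u.1 != v.1); case: (val u.2 == 0); case: (val v.2 == 0).
Qed.

Lemma compat_sym X Y : compat X Y = compat Y X.
Proof.
apply/forall_inP/forall_inP => h u hu; apply/forall_inP => v hv;
  by rewrite Kedge_sym; move: (h v hv) => /forall_inP; apply.
Qed.

Lemma bad_sub (l1 l2 : seq {set V}) :
  (forall i : 'I_D, nth set0 l1 i \subset nth set0 l2 i) -> bad l2 -> bad l1.
Proof.
move=> hs /existsP [b /existsP [p /forallP h]].
apply/existsP; exists b; apply/existsP; exists p; apply/forallP => i.
by apply: contra (h i); apply: (subsetP (hs _)).
Qed.

Lemma bad_perm (l1 l2 : seq {set V}) :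
  perm_eq l1 l2 -> size l2 = D -> bad l1 -> bad l2.
Proof.
move=> hp hs /existsP [b /existsP [p /forallP h]].
have t2 : size l2 == D by apply/eqP.
move: hp; rewrite -[l2]/(val (Tuple t2)) => /tuple_permP [q hq].
apply/existsP; exists b; apply/existsP; exists (p * q)%g; apply/forallP => i.
move: (h i); rewrite hq permM.
rewrite (nth_map (p i)) ?size_enum_ord ?ltn_ord // nth_ord_enum.
by rewrite (tnth_nth set0).
Qed.

Lemma edge_compat X Y : edgeC Gprob (mset_of [:: X; Y]) -> compat X Y.
Proof.
move=> /existsP [X' /existsP [Y' /andP [/eqP e c]]].
by case: (pair_mset_eq e) => [[-> ->]|[-> ->]] //; rewrite compat_sym.
Qed.

Lemma wfG : wf_problem D Gprob.
Proof.
split => m.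
  by move=> /existsP [s /andP [/eqP -> _]]; rewrite msize_mset size_tuple.
by move=> /existsP [X /existsP [Y /andP [/eqP -> _]]]; rewrite msize_mset.
Qed.
End G.

Section Pi.
Variable D : nat.
Definition Sv (c : 'I_D * 'I_D) : {set V D} := [set (false, c.1); (true, c.2)].

Lemma PiE_compat a b : PiE a b -> compat (Sv a) (Sv b).
Proof.
case: a b => y z [y' z']; rewrite /PiE /isone => h.
apply/forall_inP => u; rewrite !inE => /orP [] /eqP ->;
apply/forall_inP => v; rewrite !inE => /orP [] /eqP ->;
rewrite /Kedge /= ?xpair_eqE /=; move: h;
by do ! case: (_ == _).
Qed.
End Pi.

Section PiRelax.
Variable D : nat.
Hypothesis hD : 0 < D.

Definition fPi (C : mset ('I_D * 'I_D)%type) (j : 'I_D) : {set V D} :=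
  Sv (odflt (j, j) [pick x | 0 < C x]).

Lemma fPi_const c j : fPi (mset_of (nseq D c)) j = Sv c.
Proof.
rewrite /fPi; case: pickP => [x|] /=.
  by rewrite ffunE count_nseq /=; case: (eqVneq c x) => [->//|]; rewrite mul0n.
by move/(_ c); rewrite ffunE count_nseq /= eqxx mul1n hD.
Qed.

Lemma mem_const c (C : mset ('I_D * 'I_D)%type) j L :
  C = mset_of (nseq D c) -> onth (mlist C) j = Some L -> L = c.
Proof.
move=> -> h; have : L \in mlist (mset_of (nseq D c)) by apply/onthP; exists j.
rewrite mem_mlist ffunE count_nseq /=.
by case: (eqVneq c L) => [->//|]; rewrite mul0n.
Qed.

Lemma val_mktuple (T : Type) (g : 'I_D -> T) : val [tuple g j | j < D] = [seq g j | j <- enum 'I_D].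
Proof. by rewrite /mktuple /= enumT unlock. Qed.

Lemma relaxPi : relax D (PiDelta D) (Gprob D).
Proof.
exists fPi; split.
  move=> C /existsP [c /eqP eC]; subst C.
  apply/existsP; exists [tuple fPi (mset_of (nseq D c)) j | j < D].
  rewrite val_mktuple eqxx /=.
  apply/negP => /existsP [b /existsP [p /forallP h]].
  move: (h (if b then c.2 else c.1)).
  rewrite (nth_map (p c.1)); last by rewrite size_enum_ord ltn_ord.
  by rewrite fPi_const /Sv !inE; case: (b) => /=; rewrite eqxx ?orbT.
move=> C C' j j' L1 L2 /existsP [c /eqP eC] /existsP [c' /eqP eC'] o1 o2.
have e1 := mem_const eC o1; have e2 := mem_const eC' o2; subst L1 L2 C C'.
rewrite !fPi_const => /existsP [a /existsP [b /andP [/eqP e h]]].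
apply/existsP; exists (Sv c); apply/existsP; exists (Sv c'); rewrite eqxx /=.
case: (pair_mset_eq e) => [[-> ->]|[-> ->]]; first exact: PiE_compat.
by rewrite compat_sym; apply: PiE_compat.
Qed.
End PiRelax.

Lemma compatP D (X Y : {set V D}) u v : compat X Y -> u \in X -> v \in Y -> Kedge u v.
Proof. by move=> /forall_inP h hu hv; move: (h u hu) => /forall_inP; apply. Qed.

Lemma not0 D : 0 < D -> ~ zero_round_solvable D (Gprob D).
Proof.
move=> hD [f [hn he]].
set C0 := mset_of (nseq D tt).
have n0 : nodeC (trivial_problem D) C0 by rewrite /= eqxx.
have o0 : forall k : 'I_D, onth (mlist C0) k = Some tt.
  move=> k; case e: (onth _ k) => [[]|]; first by [].
  by have := onthTE (mlist C0) k; rewrite e (perm_size (perm_mlist _)) size_nseq ltn_ord.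
have hc : forall j j' : 'I_D, compat (f C0 j) (f C0 j').
  move=> j j'; apply: edge_compat.
  by apply: (he C0 C0 j j' tt tt n0 n0 (o0 j) (o0 j')); rewrite /= eqxx.
have := hn C0 n0 => /existsP [s /andP [/eqP e /negP]]; apply.
apply: (bad_perm (mset_perm e)); first by rewrite size_tuple.
apply/existsP; exists [exists j, exists i, (false, i) \in f C0 j].
apply/existsP; exists 1%g; apply/forallP => i.
rewrite perm1 (nth_map i) ?size_enum_ord ?ltn_ord // nth_ord_enum.
case: existsP => [[j0 /existsP [i0 h0]]|hn0].
  apply/negP => h1.
  have k1 := compatP (hc j0 i) h0 h1.
  have k2 := compatP (hc j0 j0) h0 h0.
  have k3 := compatP (hc i i) h1 h1.
  by move: k1 k2 k3; rewrite /Kedge /= ?xpair_eqE /= !eqxx /=; do ! case: (_ == _).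
by apply/negP => h1; apply: hn0; exists i; apply/existsP; exists i.
Qed.

Lemma nth_map_codom (n : nat) (T : Type) (U : Type) (h : T -> U) (f : 'I_n -> T) x0 (i : 'I_n) :
  nth x0 (map h (codom f)) i = h (f i).
Proof.
rewrite codomE -map_comp (nth_map i) ?size_enum_ord ?ltn_ord //.
by rewrite nth_ord_enum.
Qed.

Lemma nth_codom_ord (n : nat) (T : Type) (f : 'I_n -> T) x0 (i : 'I_n) :
  nth x0 (codom f) i = f i.
Proof. by rewrite codomE (nth_map i) ?size_enum_ord ?ltn_ord // nth_ord_enum. Qed.

Lemma map_onth_iota (T : Type) (U : Type) (F : option T -> U) (l : seq T) :
  [seq F (onth l k) | k <- iota 0 (size l)] = map (fun x => F (Some x)) l.
Proof.
elim: l F => [|x l IH] F //=.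
rewrite -[1]/(1 + 0) iotaDl -map_comp.
by rewrite -(IH F).
Qed.

Lemma map_onth (n : nat) (T : Type) (U : Type) (F : option T -> U) (l : seq T) :
  size l = n -> [seq F (onth l j) | j : 'I_n <- enum 'I_n] = map (fun x => F (Some x)) l.
Proof.
move=> hs; rewrite -map_onth_iota hs -val_enum_ord -map_comp.
by [].
Qed.

Section Q.
Variable D : nat.
Local Notation P := (Gprob D).
Local Notation R := (R_problem P D).
Local Notation Q := (Q_problem D P).

Definition UR (L : labR P) : {set V D} := \bigcup_(X in val L) X.
Definition gQ (t : lab Q) : {set V D} := [set u | [forall L in val t, u \in UR L]].
Definition fQ (C : mset (lab Q)) (j : 'I_D) : {set V D} :=
  match onth (mlist C) j with Some t => gQ t | None => set0 end.

Definition relR (L1 L2 : labR P) := [forall X in val L1, forall Y in val L2, compat X Y].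

Lemma relR_sym L1 L2 : relR L1 L2 = relR L2 L1.
Proof.
apply/forall_inP/forall_inP => h X hX; apply/forall_inP => Y hY;
  by rewrite compat_sym; move: (h Y hY) => /forall_inP; apply.
Qed.

Lemma edgeR_rel L1 L2 : edgeC R (mset_of [:: L1; L2]) -> relR L1 L2.
Proof.
move=> /existsP [R1 /existsP [R2 /andP [/eqP e /andP [g _]]]].
have h : relR R1 R2.
  case/and3P: g => _ _ /forall_inP h; apply/forall_inP => X hX; apply/forall_inP => Y hY.
  by apply: edge_compat; move: (h X hX) => /forall_inP; apply.
by case: (pair_mset_eq e) => [[-> ->]|[-> ->]] //; rewrite relR_sym.
Qed.

Lemma gQ_compat (t t' : lab Q) L1 L2 :
  relR L1 L2 -> L1 \in val t -> L2 \in val t' -> compat (gQ t) (gQ t').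
Proof.
move=> /forall_inP h h1 h2; apply/forall_inP => u hu; apply/forall_inP => v hv.
move: hu hv; rewrite !inE => /forall_inP /(_ L1 h1) /bigcupP [X hX uX]
  /forall_inP /(_ L2 h2) /bigcupP [Y hY vY].
by move: (h X hX) => /forall_inP /(_ Y hY) c; apply: compatP c uX vY.
Qed.

Lemma edgeQ_compat (t t' : lab Q) : edgeC Q (mset_of [:: t; t']) -> compat (gQ t) (gQ t').
Proof.
move=> /existsP [S1 /existsP [S2 /andP [/eqP e /exists_inP [L1 h1 /exists_inP [L2 h2 hr]]]]].
have hr' := edgeR_rel hr.
case: (pair_mset_eq e) => [[-> ->]|[-> ->]]; first exact: gQ_compat hr' h1 h2.
by rewrite compat_sym; apply: gQ_compat hr' h1 h2.
Qed.

Lemma nodeQ (C : mset (lab Q)) : nodeC Q C -> nodeC P (mset_of [seq fQ C j | j <- enum 'I_D]).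
Proof.
move=> /existsP [t /andP [/eqP eC /andP [gN _]]].
have hsz : size (mlist C) = D.
  by rewrite eC (perm_size (perm_mlist _)) size_codom card_ord.
have -> : [seq fQ C j | j <- enum 'I_D] = map gQ (mlist C).
  by rewrite /fQ (map_onth (fun o => match o with Some t => gQ t | None => set0 end) hsz).
have hs : size (map gQ (mlist C)) == D by rewrite size_map hsz.
apply/existsP; exists (Tuple hs); rewrite eqxx /=.
apply/negP => hb.
have hb2 : bad (map gQ (codom t)).
  apply: (bad_perm _ _ hb); last by rewrite size_map size_codom card_ord.
  by apply: perm_map; rewrite eC perm_mlist.
case/existsP: hb2 => b /existsP [p /forallP hp].
have hc : forall k : 'I_D, exists L : labR P, (L \in val (t k)) && ((b, (p^-1)%g k) \notin UR L).
  move=> k; move: (hp ((p^-1)%g k)); rewrite nth_map_codom permKV inE.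
  by move=> /forall_inPn [L hL hn]; exists L; rewrite hL hn.
case: (fin_all_exists hc) => c0 hc0.
case/andP: gN => _ /forallP /(_ [ffun k => c0 k]).
have hin : [forall i, [ffun k => c0 k] i \in [ffun i => val (t i)] i].
  by apply/forallP => i; rewrite !ffunE; case/andP: (hc0 i).
rewrite hin /= => /existsP [t2 /andP [/eqP e2 /existsP [c2 /andP [/forallP hc2 /existsP [s2 /andP [/eqP e3 ns2]]]]]].
move/negP: ns2; apply.
apply: (bad_perm (mset_perm e3)); first by rewrite size_tuple.
apply: (@bad_sub _ _ (map UR (codom t2))).
  by move=> i; rewrite (nth_codom_ord) nth_map_codom /UR; apply: (bigcup_sup (c2 i)); apply: hc2.
apply: (bad_perm (perm_map _ (mset_perm e2))); first by rewrite size_map size_codom card_ord.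
apply/existsP; exists b; apply/existsP; exists p; apply/forallP => i.
rewrite nth_map_codom ffunE.
by case/andP: (hc0 (p i)) => _; rewrite permK.
Qed.

Lemma relaxQ : relax D Q P.
Proof.
exists fQ; split; first exact: nodeQ.
move=> C C' j j' L1 L2 _ _ o1 o2 he.
rewrite /fQ o1 o2.
apply/existsP; exists (gQ L1); apply/existsP; exists (gQ L2); rewrite eqxx /=.
exact: edgeQ_compat.
Qed.
End Q.

Theorem mainTheorem1 (D : nat) (hD : 3 <= D) :
  exists G : problem,
    [/\ wf_problem D G,
        relax D (PiDelta D) G,
        relax D (Q_problem D G) G &
        ~ zero_round_solvable D G].
Proof.
have hD0 : 0 < D by apply: leq_trans hD.
exists (Gprob D); split.
- exact: wfG.
- exact: relaxPi hD0.
- exact: relaxQ.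
- exact: not0 hD0.
Qed.
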